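(* Let $X\in\mathbb{R}^{N\times d}$ have rows ${\bm{x}}_1^\top,\dots,{\bm{x}}_N^\top$, let $Y\in\mathbb{R}^N$, $\mathbf{B}_0\in\mathbb{R}^{h\times d}$, ${\bm{v}}_0\in\mathbb{R}^h$, ${\bm{q}}_0=X\mathbf{B}_0^\top{\bm{v}}_0$, ${\bm{b}}_0=\mathrm{vec}(\mathbf{B}_0)$, and let $\nabla_{{\bm{b}}}{\bm{q}}_0\in\mathbb{R}^{N\times hd}$ be the Jacobian whose $n$-th row is $\mathrm{vec}({\bm{v}}_0{\bm{x}}_n^\top)^\top$. Let $\mathcal{K}_0=X(\mathbf{B}_0^\top\mathbf{B}_0+\|{\bm{v}}_0\|_2^2 I_{d\times d})X^\top$, assumed invertible, and let $C_1=\mathcal{K}_0^{-1}$. Define $\mathbf{B}_t$ by ${\bm{b}}_t=\mathrm{vec}(\mathbf{B}_t)={\bm{b}}_0-(\nabla_{{\bm{b}}}{\bm{q}}_0)^\top\mathcal{K}_0^{-1}({\bm{q}}_0-Y)$. Then $\mathrm{tr}(\mathbf{B}_0^\top\mathbf{B}_t)={\bm{b}}_0^\top{\bm{b}}_0-{\bm{q}}_0^\top C_1({\bm{q}}_0-Y)$, and, regarding this expression as a function of ${\bm{q}}_0\in\mathbb{R}^N$ with ${\bm{b}}_0^\top{\bm{b}}_0$ and $C_1$ held fixed, ${\bm{q}}_0^*=\tfrac12 Y$ is a maximum of $\mathrm{tr}(\mathbf{B}_0^\top\mathbf{B}_t)$.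
   Context: Setting: overparameterized two-layer linear regression with loss $\frac12\|X\mathbf{B}^\top{\bm{v}}-Y\|_2^2$, backbone $\mathbf{B}\in\mathbb{R}^{h\times d}$ and linear head ${\bm{v}}\in\mathbb{R}^h$; $\mathbf{B}_0,{\bm{v}}_0$ are the parameters at the start of finetuning and ${\bm{b}}_t$ is the converged backbone obtained from the neural tangent kernel (linearized) approximation of gradient-descent training, with $\mathcal{K}_0$ the empirical NTK on $X$. $\mathrm{vec}$ denotes column-stacking vectorization. *)

(* Defs.v *)
From mathcomp Require Import all_boot all_order all_algebra.
Set Implicit Arguments. Unset Strict Implicit. Unset Printing Implicit Defensive.
Import Order.TTheory GRing.Theory Num.Theory.
Local Open Scope ring_scope.

(* Column-stacking vectorization of an m x n matrix: entry A i j sits at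
   position j*m + i.  MathComp's [mxvec] is row-major, so vec A is the
   (transposed) row-major vectorization of A^T. *)
Definition vec (R : Type) (m n : nat) (A : 'M[R]_(m, n)) : 'cV[R]_(n * m) :=
  (mxvec A^T)^T.

Section NTK.
Variables (R : comRingType) (N d h : nat).
Variables (X : 'M[R]_(N, d)) (B0 : 'M[R]_(h, d)) (v0 : 'cV[R]_h).

Definition q0 : 'cV[R]_N := X *m B0^T *m v0.

Definition jac : 'M[R]_(N, d * h) :=
  \matrix_(n < N) (vec (v0 *m row n X))^T.

Definition sqnorm (k : nat) (v : 'cV[R]_k) : R := \sum_i v i 0 ^+ 2.

Definition K0 : 'M[R]_N :=
  X *m (B0^T *m B0 + (sqnorm v0)%:M) *m X^T.
End NTK.

(* Main.v *)
Require Import Defs.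
From mathcomp Require Import all_boot all_order all_algebra.
From mathcomp Require Import ring lra.
Import Order.TTheory GRing.Theory Num.Theory.
Local Open Scope ring_scope.

Lemma vec_dot (R : comRingType) m n (A B : 'M[R]_(m,n)) :
  ((vec A)^T *m vec B) 0 0 = \sum_i \sum_j A i j * B i j.
Proof.
rewrite /vec !trmxK mxE (reindex _ (curry_mxvec_bij _ _)) /=.
rewrite exchange_big pair_bigA /=; apply: eq_bigr => [[j i]] _ /=.
by rewrite !mxE !mxvecE !mxE.
Qed.

Lemma tr_dot (R : comRingType) m n (A B : 'M[R]_(m,n)) :
  \tr (A^T *m B) = ((vec A)^T *m vec B) 0 0.
Proof.
rewrite vec_dot /mxtrace exchange_big /=; apply: eq_bigr => j _.
by rewrite mxE; apply: eq_bigr => i _; rewrite mxE.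
Qed.

Lemma jac_q0 (R : comRingType) N d h (X : 'M[R]_(N, d)) (B0 : 'M[R]_(h, d)) (v0 : 'cV[R]_h) :
  jac X v0 *m vec B0 = q0 X B0 v0.
Proof.
apply/matrixP => n k. rewrite [k]ord1.
have E : (jac X v0 *m vec B0) n 0 = (row n (jac X v0 *m vec B0)) 0 0.
  rewrite [RHS]mxE. done.
rewrite E.
rewrite row_mul rowK vec_dot /q0 mxE.
apply: eq_bigr => i _; rewrite mxE mulr_suml; apply: eq_bigr => j _.
by rewrite !mxE big_ord1 !mxE; ring.
Qed.

Lemma dot_ge0 (R : realDomainType) k (v : 'cV[R]_k) : 0 <= (v^T *m v) 0 0.
Proof. rewrite mxE; apply: sumr_ge0 => i _; rewrite mxE -expr2; exact: sqr_ge0. Qed.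

Lemma addE (R : comRingType) (A B : 'M[R]_1) : (A + B) 0 0 = A 0 0 + B 0 0.
Proof. by rewrite mxE. Qed.
Lemma oppE (R : comRingType) (A : 'M[R]_1) : (- A) 0 0 = - A 0 0.
Proof. by rewrite mxE. Qed.

Lemma scE (R : comRingType) a (A : 'M[R]_1) : (a *: A) 0 0 = a * A 0 0.
Proof. by rewrite mxE. Qed.

Theorem lemma2 (R : realFieldType) (N d h : nat)
  (X : 'M[R]_(N, d)) (Y : 'cV[R]_N) (B0 : 'M[R]_(h, d)) (v0 : 'cV[R]_h)
  (Bt : 'M[R]_(h, d)) :
  K0 X B0 v0 \in unitmx ->
  vec Bt = vec B0 - (jac X v0)^T *m invmx (K0 X B0 v0) *m (q0 X B0 v0 - Y) ->
  let C1 := invmx (K0 X B0 v0) in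
  let b0 := vec B0 in
  let f := fun q : 'cV[R]_N => (b0^T *m b0) 0 0 - (q^T *m C1 *m (q - Y)) 0 0 in
  \tr (B0^T *m Bt) = f (q0 X B0 v0) /\
  (forall q : 'cV[R]_N, f q <= f ((2^-1) *: Y)).
Proof.
move=> Ku HBt C1 b0 f.
split.
  rewrite tr_dot HBt /f /C1 /b0 mulmxBr addE oppE; congr (_ - _).
  by rewrite !mulmxA -trmx_mul jac_q0.
set K := K0 X B0 v0.
have symK : K^T = K.
  have symM : (B0^T *m B0 + (sqnorm v0)%:M)^T = B0^T *m B0 + (sqnorm v0)%:M.
    by rewrite linearD /= trmx_mul trmxK tr_scalar_mx.
  by rewrite /K /K0 !trmx_mul trmxK symM mulmxA.
have symC : C1^T = C1 by rewrite /C1 trmx_inv symK.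
have psd : forall z : 'cV_N, 0 <= (z^T *m C1 *m z) 0 0.
  move=> z; set w := C1 *m z.
  have zK : z = K *m w by rewrite /w mulmxA mulmxV // mul1mx.
  have -> : z^T *m C1 *m z = w^T *m K *m w.
    by rewrite {1}zK trmx_mul symK -!mulmxA.
  clearbody w.
  set u := X^T *m w.
  have -> : w^T *m K *m w = (B0 *m u)^T *m (B0 *m u) + sqnorm v0 *: (u^T *m u).
    rewrite /K /K0 /u !trmx_mul !trmxK.
    rewrite !mulmxDr !mulmxDl mul_mx_scalar -?scalemxAr ?mulmxDr ?mulmxDl -?scalemxAr -?scalemxAl !mulmxA.
    by rewrite -scalemxAr -scalemxAl !mulmxA.
  rewrite addE scE; apply: addr_ge0; first exact: dot_ge0.
  apply: mulr_ge0; last exact: dot_ge0.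
  by apply: sumr_ge0 => i _; rewrite sqr_ge0.
move=> q; rewrite /f lerD2l lerN2.
set a := 2^-1 *: Y.
have hY : Y = a + a by rewrite /a -scalerDl -[2^-1]mul1r -splitr scale1r.
set z := q - a.
have hq : q = z + a by rewrite /z subrK.
have h1 : q - Y = z - a by rewrite hY /z opprD addrA.
clearbody z.
have h2 : a - Y = - a by rewrite hY opprD addrA subrr add0r.
have e1 : (z^T *m C1 *m a) 0 0 = (a^T *m C1 *m z) 0 0.
  transitivity ((z^T *m C1 *m a)^T 0 0); first by rewrite [RHS]mxE.
  by rewrite !trmx_mul trmxK symC mulmxA.
rewrite h1 h2 hq [(z + a)^T]linearD /= mulmxDl !mulmxDr !mulmxN !addE !oppE !mulmxDl !addE e1.
have := psd z; lra.
Qed.
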